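(* For every integer $n\geq 2$, the path $P_n$ on $n$ vertices satisfies $\operatorname{th}_{\operatorname{H}}(P_n)=\lceil 2\sqrt{n-1}\rceil$.
   Context: All graphs are finite, simple and undirected. Hopping color change rule: a blue vertex $v$ may force a white vertex $w$ to become blue if $v$ has not previously performed a force and every neighbor of $v$ is blue. For an initial blue set $B$, a chronological list of forces of $B$ is a sequence of such forces applied one at a time until no further force is possible; its underlying unordered set is a set of forces of $B$. $B$ is a hopping forcing set if some chronological list of forces of $B$ turns all vertices blue. For a set of forces $\mathcal F$ of $B$, let $\mathcal F^{(0)}=B$ and for $t\geq1$ let $\mathcal F^{(t)}$ be the set of vertices $w\notin U_{t-1}:=\bigcup_{i=0}^{t-1}\mathcal F^{(i)}$ for which there is $(v\to w)\in\mathcal F$ with $v\in U_{t-1}$ and all neighbors of $v$ in $U_{t-1}$. $\operatorname{pt}_{\operatorname{H}}(G;\mathcal F)$ is the least $t$ with $\bigcup_{i=0}^t\mathcal F^{(i)}=V(G)$ ($\infty$ if none); $\operatorname{pt}_{\operatorname{H}}(G;B)$ is the minimum of $\operatorname{pt}_{\operatorname{H}}(G;\mathcal F)$ over sets of forces $\mathcal F$ of $B$ ($\infty$ if $B$ is not a hopping forcing set). $\operatorname{th}_{\operatorname{H}}(G)=\min_{B\subseteq V(G)}\big(|B|+\operatorname{pt}_{\operatorname{H}}(G;B)\big)$. *)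

(* Defs.v *)
From HB Require Import structures.
From mathcomp Require Import all_boot all_order all_algebra.
From mathcomp Require Import Rstruct.

Set Implicit Arguments.
Unset Strict Implicit.
Unset Printing Implicit Defensive.

Section Hopping.
Variables (T : finType) (e : rel T).
Definition simple_graph := symmetric e /\ irreflexive e.

Definition nbrs (v : T) : {set T} := [set u | e v u].

(* v may force w when the current blue set is S and the set of vertices that
   have already performed a force is used. *)
Definition can_force (S used : {set T}) (v w : T) : bool :=
  [&& v \in S, w \notin S, v \notin used & nbrs v \subset S].

Fixpoint chrono_ok (S used : {set T}) (s : seq (T * T)) : bool :=
  if s is (v, w) :: s' then can_force S used v w && chrono_ok (w |: S) (v |: used) s'
  else true.

Definition blue_after (B : {set T}) (s : seq (T * T)) : {set T} :=
  B :|: [set p.2 | p in [set q in s]].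
Definition forcers (s : seq (T * T)) : {set T} := [set p.1 | p in [set q in s]].

Definition chrono_list (B : {set T}) (s : seq (T * T)) : bool :=
  chrono_ok B set0 s &&
  ~~ [exists v, exists w, can_force (blue_after B s) (forcers s) v w].

Definition set_of_forces (B : {set T}) (F : {set T * T}) : Prop :=
  exists s, chrono_list B s /\ F = [set q in s].

Definition hopping_forcing_set (B : {set T}) : Prop :=
  exists s, chrono_list B s /\ blue_after B s = [set: T].

Fixpoint blue_at (B : {set T}) (F : {set T * T}) (t : nat) : {set T} :=
  if t is t'.+1 then
    let U := blue_at B F t' in
    U :|: [set w | [exists v, [&& (v, w) \in F, v \in U & nbrs v \subset U]]]
  else B.

Definition pt_H_set_is (B : {set T}) (F : {set T * T}) (t : nat) : Prop :=
  blue_at B F t = [set: T] /\ forall t', blue_at B F t' = [set: T] -> t <= t'.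

(* th_H(G) = k : k is the minimum of |B| + pt_H(G;B) over all B, where
   pt_H(G;B) is the minimum over sets of forces F of B of pt_H(G;F)
   (infinite values never attain the minimum). *)
Definition th_H_is (k : nat) : Prop :=
  (exists B F t, hopping_forcing_set B /\ set_of_forces B F /\
     blue_at B F t = [set: T] /\ #|B| + t = k) /\
  (forall B F t, hopping_forcing_set B -> set_of_forces B F ->
     blue_at B F t = [set: T] -> k <= #|B| + t).
End Hopping.

Definition path_graph (n : nat) : rel 'I_n :=
  fun i j => (i.+1 == j :> nat) || (j.+1 == i :> nat).
Arguments path_graph : clear implicits.

(* Main.v *)
Require Import Defs.
From mathcomp Require Import all_boot all_order all_algebra.
From mathcomp Require Import Rstruct.
From mathcomp Require Import ring lra zify.
Import Order.TTheory GRing.Theory Num.Theory.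
Set Implicit Arguments.
Unset Strict Implicit.
Lemma ceil_facts (m : nat) :
  let k := absz (Num.ceil (2 * Num.sqrt (m%:R : Rdefinitions.R)))%R in
  (4 * m <= k^2) /\ forall x, 4 * m <= x^2 -> k <= x.
Proof.
move=> k.
set y := (2 * Num.sqrt (m%:R : Rdefinitions.R))%R.
have y0 : (0 <= y)%R by rewrite mulr_ge0 // sqrtr_ge0.
have hy2 : (y ^+ 2 = (4 * m)%N%:R)%R.
  rewrite /y exprMn sqr_sqrtr ?ler0n // natrM; congr (_ * _)%R; by rewrite expr2 -natrM.
have hc : (0 <= Num.ceil y)%R by rewrite ceil_ge0 (lt_le_trans _ y0) // ltrN10.
have kZ : ((k%:Z)%R = Num.ceil y) by rewrite /k gez0_abs.
split.
  have h1 : (y <= k%:R)%R.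
    have := ceil_ge y; by rewrite -kZ.
  have : ((4 * m)%N%:R <= (k ^ 2)%N%:R :> Rdefinitions.R)%R.
    rewrite -hy2 natrX. rewrite lerXn2r ?nnegrE //.
  by rewrite ler_nat.
move=> x hx.
have hx' : (y ^+ 2 <= x%:R ^+ 2)%R by rewrite hy2 -natrX ler_nat.
have : (y <= x%:R)%R.
  have x0 : (0 <= x%:R :> Rdefinitions.R)%R by rewrite ler0n.
  nra.
rewrite -(ceil_le_int y x) -kZ.
by rewrite lez_nat.
Qed.
Lemma chrono_src (T : finType) (e : rel T) S used s v w :
  chrono_ok e S used s -> (v, w) \in s -> v \notin used.
Proof.
elim: s S used => [|[v0 w0] s IH] S used //=.
case/andP=> hf hok; rewrite inE; case/orP.
  by case/eqP=> -> _; case/and4P: hf.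
move=> hin; have := IH _ _ hok hin; by rewrite inE negb_or => /andP[].
Qed.

Lemma chrono_fun (T : finType) (e : rel T) S used s v w w' :
  chrono_ok e S used s -> (v, w) \in s -> (v, w') \in s -> w = w'.
Proof.
elim: s S used => [|[v0 w0] s IH] S used //=.
case/andP=> hf hok; rewrite !inE.
have hs : forall x, (v0, x) \in s -> False.
  by move=> x hx; have := chrono_src hok hx; rewrite !inE eqxx.
case/orP=> [/eqP[e1 e2]|h1]; case/orP=> [/eqP[e3 e4]|h2]; subst => //.
- by case: (hs _ h2).
- by case: (hs _ h1).
- exact: IH hok h1 h2.
Qed.

Definition ready (T : finType) (e : rel T) (U : {set T}) :=
  [set v in U | nbrs e v \subset U].

Lemma blue_at_S (T : finType) (e : rel T) (B : {set T}) (F : {set T * T}) (i : nat) :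
  blue_at e B F i \subset blue_at e B F i.+1.
Proof. by rewrite /= subsetUl. Qed.

Lemma blue_at_mono (T : finType) (e : rel T) (B : {set T}) (F : {set T * T}) (i : nat) j :
  i <= j -> blue_at e B F i \subset blue_at e B F j.
Proof.
move=> /subnK <-; elim: (j - i) => [|k IH] //.
by rewrite addSn (subset_trans IH) // blue_at_S.
Qed.

Lemma ready_mono (T : finType) (e : rel T) (U V : {set T}) :
  U \subset V -> ready e U \subset ready e V.
Proof.
move=> hUV; apply/subsetP=> x; rewrite !inE => /andP[hx hn].
by rewrite (subsetP hUV) // (subset_trans hn hUV).
Qed.

Lemma blue_src (T : finType) (e : rel T) (B : {set T}) (F : {set T * T}) (i : nat) w :
  w \in blue_at e B F i.+1 ->
  w \in B \/ exists v, v \in ready e (blue_at e B F i) /\ (v, w) \in F.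
Proof.
elim: i w => [|i IH] w.
  rewrite /= inE => /orP[-> |]; first by left.
  rewrite inE => /existsP[v /and3P[h1 h2 h3]]; right; exists v.
  by rewrite inE h2 h3.
rewrite [blue_at _ _ _ i.+2]/= inE => /orP[/IH [->|[v [hv hF]]]|]; first by left.
  right; exists v; split => //.
  exact: (subsetP (ready_mono _ (blue_at_S e B F i))).
rewrite inE => /existsP[v /and3P[h1 h2 h3]]; right; exists v.
by rewrite inE h2 h3.
Qed.

Lemma card_step (T : finType) (e : rel T) (B : {set T}) (F : {set T * T}) (i : nat) :
  (forall v w w', (v, w) \in F -> (v, w') \in F -> w = w') ->
  #|blue_at e B F i.+1| <= #|B| + #|ready e (blue_at e B F i)|.
Proof.
move=> hfun.
set R := ready e (blue_at e B F i).
set F' := [set p in F | p.1 \in R].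
have hsub : blue_at e B F i.+1 \subset B :|: [set p.2 | p in F'].
  apply/subsetP=> w /blue_src [hw|[v [hv hF]]]; rewrite inE ?hw //.
  apply/orP; right; apply/imsetP; exists (v, w) => //.
  by rewrite inE hF hv.
apply: (leq_trans (subset_leq_card hsub)).
apply: (leq_trans (leq_card_setU _ _)); rewrite leq_add2l.
apply: (leq_trans (leq_imset_card _ _)).
have -> : #|F'| = #|[set p.1 | p in F']|.
  rewrite card_in_imset //.
  move=> [v1 w1] [v2 w2]; rewrite !inE /= => /andP[h1 _] /andP[h2 _] ev.
  by subst; rewrite (hfun _ _ _ h1 h2).
apply: subset_leq_card; apply/subsetP=> x /imsetP[p]; rewrite inE => /andP[_ hp] ->.
done.
Qed.
Lemma path_closed n (U : {set 'I_n}) :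
  (forall x y, path_graph n x y -> x \in U -> y \in U) ->
  forall x y, x \in U -> y \in U.
Proof.
move=> hcl.
have key : forall k (x y : 'I_n), val y = val x + k -> (x \in U) = (y \in U).
  elim=> [|k IH] x y hxy.
    by rewrite addn0 in hxy; rewrite (val_inj hxy).
  have hz : val x + k < n by have := ltn_ord y; rewrite hxy; lia.
  rewrite (IH x (Ordinal hz)) //.
  apply/idP/idP.
    apply: hcl; by rewrite /path_graph /= hxy addnS eqxx.
  apply: hcl; by rewrite /path_graph /= hxy addnS eqxx orbT.
move=> x y hx.
case: (leqP (val x) (val y)) => h.
  by rewrite -(key (val y - val x) x y) // subnKC.
by rewrite (key (val x - val y) y x) // subnKC // ltnW.
Qed.

Lemma ready_lt n (U : {set 'I_n}) : U != setT ->
  #|ready (path_graph n) U| <= #|U| - 1.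
Proof.
move=> hU.
have hsub : ready (path_graph n) U \subset U.
  by apply/subsetP=> x; rewrite inE => /andP[].
case: (set0Pn U) => [[x0 hx0] | h0]; last first.
  have hU0 : U = set0 by apply/eqP; apply/negbNE/negP => /set0Pn.
  have := subset_leq_card hsub; rewrite hU0 cards0; lia.
case: (boolP [exists y, y \notin U]) => [/existsP[y0 hy0] | hall]; last first.
  case/negP: hU; apply/eqP/setP=> z; rewrite inE.
  by apply/negbNE/negP=> hz; case/negP: hall; apply/existsP; exists z.
case: (boolP [exists x, exists y, [&& x \in U, y \notin U & path_graph n x y]]).
  move=> /existsP[x /existsP[y /and3P[hx hy hxy]]].
  have : #|ready (path_graph n) U| < #|U|.
    apply: proper_card; apply/properP; split => //; exists x => //.
    rewrite inE hx /=; apply/negP=> /subsetP /(_ y).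
    by rewrite inE hxy => /(_ isT); apply/negP.
  lia.
move=> hno; exfalso.
suff : y0 \in U by rewrite (negbTE hy0).
apply: (@path_closed n U _ x0 y0 hx0).
move=> x y hxy hx; apply/negPn/negP=> hy; case/negP: hno.
by apply/existsP; exists x; apply/existsP; exists y; rewrite hx hy hxy.
Qed.

Lemma nat_amgm b t n : 2 <= n -> n <= b + t * (b - 1) -> 4 * (n - 1) <= (b + t) ^ 2.
Proof.
move=> h2 h.
case: b h => [|b] h; first by lia.
rewrite subSS subn0 in h.
have : 4 * (b * (t + 1)) <= (b.+1 + t) ^ 2.
  have -> : b.+1 + t = b + (t + 1) by lia.
  case: (leqP b (t + 1)) => hbt.
    move/subnKC: hbt; move: (t + 1 - b) => d <-.
    rewrite expnS expn1; nia.
  move/ltnW/subnKC: hbt; move: (b - (t + 1)) => d <-.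
  rewrite expnS expn1; nia.
nia.
Qed.

Lemma lower n (B : {set 'I_n}) F t : 2 <= n ->
  set_of_forces (path_graph n) B F -> blue_at (path_graph n) B F t = setT ->
  4 * (n - 1) <= (#|B| + t) ^ 2.
Proof.
move=> h2 [s [hcl ->]] hfull.
case/andP: hcl => hok _.
have hfun : forall v w w', (v, w) \in [set q in s] -> (v, w') \in [set q in s] -> w = w'.
  by move=> v w w'; rewrite !inE; apply: chrono_fun hok.
set b := #|B|.
have bound : forall i, #|blue_at (path_graph n) B [set q in s] i| <= b + i * (b - 1).
  elim=> [|i IH]; first by rewrite /= mul0n addn0.
  case: (boolP (blue_at (path_graph n) B [set q in s] i == setT)) => hT.
    have -> : blue_at (path_graph n) B [set q in s] i.+1 = setT.
      by apply/eqP; rewrite eqEsubset subsetT /= -(eqP hT) blue_at_S.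
    rewrite -(eqP hT); apply: (leq_trans IH); rewrite leq_add2l leq_mul2r; lia.
  have h1 := card_step (path_graph n) B i hfun.
  have h2' : #|ready (path_graph n) (blue_at (path_graph n) B [set q in s] i)| <=
     #|blue_at (path_graph n) B [set q in s] i| - 1 := ready_lt hT.
  rewrite -/b in h1; rewrite mulSn.
  case: (posnP b) => hb.
    rewrite hb sub0n muln0 addn0 in IH *; lia.
  move: IH h1 h2'; move: (i * (b - 1)) => X; lia.
have := bound t; rewrite hfull cardsT card_ord => hn.
exact: nat_amgm.
Qed.
Definition fseq (n d : nat) : seq ('I_n.+1 * 'I_n.+1) :=
  [seq (inord v, inord (v + d + 1)) | v <- iota 0 (n.+1 - d - 1)].

Lemma mem_fseq n d v w : (v, w) \in fseq n d <->
  exists j, [/\ j < n.+1 - d - 1, v = inord j & w = inord (j + d + 1)].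
Proof.
split.
  case/mapP=> j; rewrite mem_iota add0n => /andP[_ hj] [-> ->].
  by exists j.
case=> j [hj -> ->]; apply/mapP; exists j => //.
by rewrite mem_iota add0n hj.
Qed.

Lemma chrono_gen n d : 0 < d -> forall j k, j + k = n.+1 - d - 1 ->
  chrono_ok (path_graph n.+1) [set x : 'I_n.+1 | x < k + d + 1] [set x : 'I_n.+1 | x < k]
    [seq (inord v, inord (v + d + 1)) | v <- iota k j].
Proof.
move=> hd; elim=> [|j IH] k hjk //=.
have hk : k + d + 1 < n.+1 by lia.
apply/andP; split.
  rewrite /can_force !inE !inordK; [|lia|lia].
  apply/and4P; split; [lia|lia|lia|].
  apply/subsetP=> u; rewrite !inE /path_graph !inordK; [|lia].
  by case/orP=> /eqP h; lia.
have -> : inord (k + d + 1) |: [set x : 'I_n.+1 | x < k + d + 1] =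
          [set x : 'I_n.+1 | x < k.+1 + d + 1].
  apply/setP=> x; rewrite !inE -val_eqE /= inordK //.
  apply/idP/idP; [case/orP => h; lia | move=> h; apply/orP; lia].
have -> : inord k |: [set x : 'I_n.+1 | x < k] = [set x : 'I_n.+1 | x < k.+1].
  apply/setP=> x; rewrite !inE -val_eqE /= inordK; last lia.
  apply/idP/idP; [case/orP => h; lia | move=> h; apply/orP; lia].
apply: IH; lia.
Qed.

Definition Bd n d : {set 'I_n.+1} := [set x : 'I_n.+1 | x < d + 1].

Lemma blue_after_fseq n d : blue_after (Bd n d) (fseq n d) = setT.
Proof.
apply/setP=> w; rewrite !inE; case: (ltnP w (d + 1)) => h //=.
apply/imsetP; exists (inord (w - d - 1), w).
  rewrite inE; apply/mem_fseq; exists (w - d - 1); split => //.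
    have := ltn_ord w; lia.
  apply: val_inj; rewrite /= inordK; last (have := ltn_ord w; lia).
  lia.
by [].
Qed.

Lemma chrono_fseq n d : 0 < d -> chrono_list (path_graph n.+1) (Bd n d) (fseq n d).
Proof.
move=> hd; apply/andP; split.
  have := @chrono_gen n d hd (n.+1 - d - 1) 0 (addn0 _).
  have -> : [set x : 'I_n.+1 | x < 0] = set0 by apply/setP=> x; rewrite !inE.
  by rewrite add0n.
apply/negP=> /existsP[v /existsP[w]].
rewrite /can_force => /and4P[_ hw _ _].
by rewrite blue_after_fseq inE in hw.
Qed.

Lemma blue_at_fseq n d : 0 < d -> forall i,
  blue_at (path_graph n.+1) (Bd n d) [set q in fseq n d] i =
  [set x : 'I_n.+1 | x < d + 1 + i * d].
Proof.
move=> hd; elim=> [|i IH]; first by rewrite /= mul0n addn0.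
rewrite [LHS]/= IH; apply/setP=> x; rewrite !inE.
set c := d + 1 + i * d.
have hx := ltn_ord x.
apply/idP/idP.
  case/orP; first by rewrite mulSn; lia.
  move=> /existsP[v /and3P[]]; rewrite inE => /mem_fseq[j [hj -> ->]].
  rewrite inE inordK; last lia.
  move=> hjc /subsetP /(_ (inord j.+1)).
  rewrite !inE /path_graph !inordK; try lia.
rewrite mulSn => hxc.
case: (ltnP x c) => hxc' //=.
apply/existsP; exists (inord (x - d - 1)); apply/and3P; split.
- rewrite inE; apply/mem_fseq; exists (x - d - 1); split => //; first lia.
  apply: val_inj; rewrite /= inordK; lia.
- rewrite inE inordK; lia.
- apply/subsetP=> u; rewrite !inE /path_graph inordK; last lia.
  by case/orP=> /eqP h; lia.
Qed.

Lemma card_Bd n d : #|Bd n d| <= d + 1.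
Proof.
have : Bd n d \subset [set inord (val j) | j : 'I_(d + 1)].
  apply/subsetP=> x; rewrite inE => hx.
  apply/imsetP; exists (Ordinal hx) => //=.
  by rewrite inord_val.
move/subset_leq_card => h; apply: leq_trans h _.
by apply: leq_trans (leq_imset_card _ _) _; rewrite card_ord.
Qed.

Lemma numeric k n' : 1 <= n' -> 4 * n' <= k ^ 2 ->
  [/\ 0 < k./2, k./2 + 1 <= k & n'.+1 <= k./2 + 1 + (k - 1 - k./2) * k./2].
Proof.
move=> h1 h2.
have hk := odd_double_half k; rewrite -muln2 in hk.
move: (odd k) (k./2) hk => r d hk.
rewrite expnS expn1 in h2.
case: r hk => /= hk; subst k.
  case: d h2 => [|d] h2; first by lia.
  have -> : 1 + d.+1 * 2 - 1 - d.+1 = d.+1 by lia.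
  split; nia.
case: d h2 => [|d] h2; first by lia.
have -> : 0 + d.+1 * 2 - 1 - d.+1 = d by lia.
split; nia.
Qed.

Local Open Scope ring_scope.

Theorem proposition3p5 (n : nat) : (2 <= n)%N ->
  th_H_is (path_graph n)
    (absz (Num.ceil (2 * Num.sqrt ((n.-1)%:R : Rdefinitions.R)))).
Proof.
move=> hn.
have [hA hB] := ceil_facts n.-1.
move: hA hB; set k := absz _ => hA hB.
case: n hn k hA hB => [|n'] // hn k hA hB.
rewrite /= in hA hB.
split; last first.
  move=> B F t _ hF hfull; apply: hB.
  by have := lower hn hF hfull; rewrite subSS subn0.
have [hd hdk hcov] := numeric (ltac:(lia) : (1 <= n')%N) hA.
set d := k./2 in hd hdk hcov.
set t := (k - 1 - d)%N in hcov.
have hcB := card_Bd n' d.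
exists (Bd n' d), [set q in fseq n' d], (k - #|Bd n' d|)%N; split.
  by exists (fseq n' d); split; [apply: chrono_fseq | apply: blue_after_fseq].
split; first by exists (fseq n' d); split => //; apply: chrono_fseq.
split; last by rewrite subnKC //; apply: leq_trans hcB hdk.
have ht : blue_at (path_graph n'.+1) (Bd n' d) [set q in fseq n' d] t = setT.
  rewrite blue_at_fseq //; apply/setP=> x; rewrite !inE.
  by have := ltn_ord x; lia.
apply/eqP; rewrite eqEsubset subsetT /= -ht; apply: blue_at_mono.
by rewrite /t -subnDA addnC; apply: leq_sub2l.
Qed.
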